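(* For all $u,v,w\in\mathcal{A}(D)$ we have $\langle u, v*w\rangle=\langle u*v,w\rangle$.
   Context: Let $G$ be a group generated by a conjugacy class $D$ of involutions such that for all $d,e\in D$ the order of $de$ is $1$, $2$ or $3$ ($3$-transpositions). Lines of the Fischer space on $D$ are triples $\{d,e,d^e\}$ with $d,e\in D$ non-commuting. $\mathcal{A}(D)$ is the $\mathbb{F}_2$-vector space with basis $D$ (finite subsets of $D$ under symmetric difference), with bilinear product determined by $d*e=d+e+f$ if $\{d,e,f\}$ is a line and $d*e=0$ otherwise. The bilinear form $\langle\cdot,\cdot\rangle$ on $\mathcal{A}(D)$ is determined by $\langle d,e\rangle=1$ if $d,e$ do not commute and $\langle d,e\rangle=0$ otherwise. *)

(* Defs.v *)
From HB Require Import structures.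
From mathcomp Require Import all_boot.
From mathcomp Require Import finmap.

Set Implicit Arguments.
Unset Strict Implicit.
Unset Printing Implicit Defensive.

Local Open Scope fset_scope.
Local Open Scope group_scope.

Section Defs.
Variable G : groupType.

Definition elt_order_is (x : G) (n : nat) : Prop :=
  (0 < n)%N /\ x ^+ n = 1 /\ forall m : nat, (0 < m < n)%N -> x ^+ m <> 1.

Definition is_conj_class (D : {pred G}) : Prop :=
  exists d0 : G, forall x : G, x \in D <-> exists g : G, x = d0 ^ g.

Definition generated_by (D : {pred G}) : Prop :=
  forall H : {pred G},
    1 \in H ->
    (forall x y, x \in H -> y \in H -> x * y \in H) ->
    (forall x, x \in H -> x^-1 \in H) ->
    {subset D <= H} -> forall g : G, g \in H.

Definition three_transp_class (D : {pred G}) : Prop :=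
  [/\ is_conj_class D,
      generated_by D,
      (forall d, d \in D -> elt_order_is d 2) &
      (forall d e, d \in D -> e \in D ->
         elt_order_is (d * e) 1 \/ elt_order_is (d * e) 2 \/ elt_order_is (d * e) 3)].

(* Elements of A(D): finite subsets of D; addition = symmetric difference *)
Definition symd (A B : {fset G}) : {fset G} := (A `\` B) `|` (B `\` A).

Definition in_AD (D : {pred G}) (u : {fset G}) : Prop := {subset u <= D}.

(* product of basis elements: d*e = d+e+f if {d,e,f} is a line (d,e non-commuting,
   f = d^e), and 0 otherwise *)
Definition basis_prod (d e : G) : {fset G} :=
  if d * e != e * d then symd [fset d] (symd [fset e] [fset d ^ e]) else fset0.

Definition AD_prod (u v : {fset G}) : {fset G} :=
  \big[symd/fset0]_(d <- enum_fset u) \big[symd/fset0]_(e <- enum_fset v) basis_prod d e.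

(* bilinear form with values in F_2 = (bool, addb): <d,e> = 1 iff d,e do not commute *)
Definition basis_form (d e : G) : bool := d * e != e * d.

Definition AD_form (u v : {fset G}) : bool :=
  \big[addb/false]_(d <- enum_fset u) \big[addb/false]_(e <- enum_fset v) basis_form d e.

End Defs.

(* Main.v *)
Require Import Defs.
From HB Require Import structures.
From mathcomp Require Import all_boot.
From mathcomp Require Import finmap.
Set Implicit Arguments.
Unset Strict Implicit.
Local Open Scope fset_scope.
Local Open Scope group_scope.

Section G.
Variable G : groupType.
Implicit Types x y z : G.

Lemma inv_invol x : x * x = 1 -> x^-1 = x.
Proof. by move=> h; apply: mulg1_eq. Qed.

Lemma braid_conj x y : x * x = 1 -> y * y = 1 -> (x * y) ^+ 3 = 1 -> (x ^ y) ^ x = y.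
Proof.
move=> hx hy h3.
have ix := inv_invol hx; have iy := inv_invol hy.
have hb : x * y * x = y * x * y.
  have : (x * y * x) * (y * x * y) = 1 by rewrite -h3 !expgS expg0 mulg1 !mulgA.
  move/mulg1_eq => <-; by rewrite !invgM ix iy !mulgA.
rewrite !conjgE ix iy !mulgA hb -(mulgA (y*x) y y) hy mulg1 -mulgA hx mulg1 //.
Qed.

Lemma D_facts (D : {pred G}) : three_transp_class D ->
  (forall d, d \in D -> d * d = 1) /\
  (forall d e, d \in D -> e \in D -> d * e != e * d -> (d ^ e) ^ d = e).
Proof.
case=> _ _ hinv hord.
have hi : forall d, d \in D -> d * d = 1.
  by move=> d /hinv [_ [h _]]; rewrite -h expg2.
split=> // d e hd he hne; apply: braid_conj; [exact: hi|exact: hi|].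
case: (hord d e hd he) => [[_ [h _]]|[[_ [h _]]|[_ [h _]]]] //; exfalso; move/eqP: hne; apply.
- rewrite expg1 in h. have := mulg1_eq h. rewrite inv_invol ?hi // => ->.
  done.
- rewrite expg2 in h. have := mulg1_eq h. rewrite invgM !inv_invol ?hi //.
  
Qed.
End G.
Section S.
Variable T : groupType.
Definition SS (g : T -> bool) (A : {fset T}) := \big[addb/false]_(e <- enum_fset A) g e.

Lemma SS_sub g A s : uniq s -> {subset A <= s} ->
  SS g A = \big[addb/false]_(e <- s | e \in A) g e.
Proof.
move=> us sub; rewrite /SS -[RHS]big_filter. apply: perm_big; apply: uniq_perm.
- exact: fset_uniq.
- exact: filter_uniq.
move=> x; rewrite mem_filter; apply/idP/andP => [h|[]//].
split => //; exact: sub.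
Qed.

Lemma SS_symd g A B : SS g (symd A B) = SS g A (+) SS g B.
Proof.
have us := fset_uniq (A `|` B).
have s1 : {subset A <= enum_fset (A `|` B)} by move=> x hx; rewrite in_fsetU hx.
have s2 : {subset B <= enum_fset (A `|` B)} by move=> x hx; rewrite in_fsetU hx orbT.
have s3 : {subset symd A B <= enum_fset (A `|` B)}.
  move=> x; rewrite /symd /= !in_fsetU !in_fsetD.
  by case: (x \in A); case: (x \in B).
rewrite (SS_sub _ us s1) (SS_sub _ us s2) (SS_sub _ us s3).
rewrite big_mkcond [X in _ = X (+) _]big_mkcond [X in _ = _ (+) X]big_mkcond -big_split /=; apply: eq_bigr => x _.
rewrite /symd !in_fsetU !in_fsetD; by case: (x \in A); case: (x \in B); case: (g x).
Qed.

Lemma SS_def g A : SS g A = \big[addb/false]_(e <- enum_fset A) g e.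
Proof. by []. Qed.

Lemma SS0 g : SS g fset0 = false.
Proof. by rewrite (@SS_sub g fset0 [::]) // ?big_nil // => x; rewrite in_fset0. Qed.

Lemma SS1 g x : SS g [fset x] = g x.
Proof.
rewrite (@SS_sub g [fset x] [:: x]) // ?big_cons ?big_nil ?in_fset1 ?eqxx ?addbF //.
by move=> y; rewrite in_fset1 mem_seq1.
Qed.

Lemma SS_big (I : Type) g (r : seq I) (F : I -> {fset T}) :
  SS g (\big[@symd T/fset0]_(i <- r) F i) = \big[addb/false]_(i <- r) SS g (F i).
Proof.
elim: r => [|i r IH]; first by rewrite !big_nil SS0.
by rewrite !big_cons SS_symd IH.
Qed.
End S.

Section Main.
Variable T : groupType.
Implicit Types x y z : T.

Lemma conj_fix x y : x * y = y * x -> x ^ y = x.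
Proof. by move=> h; rewrite conjgE h mulKg. Qed.

Lemma bf_conj x y g : basis_form (x ^ g) (y ^ g) = basis_form x y.
Proof.
rewrite /basis_form -!conjMg; congr (~~ _); apply/eqP/eqP => [h|->//].
exact: conjg_inj h.
Qed.

Lemma SS_bp (g : T -> bool) d e : SS g (basis_prod d e) =
  if d * e != e * d then g d (+) (g e (+) g (d ^ e)) else false.
Proof. by rewrite /basis_prod; case: ifP => _; rewrite ?SS0 // !SS_symd !SS1. Qed.

Lemma SS_exch (I : Type) (s : seq I) (h : T -> I -> bool) A :
  SS (fun x => \big[addb/false]_(f <- s) h x f) A =
  \big[addb/false]_(f <- s) SS (fun x => h x f) A.
Proof. by rewrite /SS; apply: exchange_big. Qed.

Lemma key (D : {pred T}) : three_transp_class D -> forall d e f,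
  d \in D -> e \in D -> f \in D ->
  SS (basis_form d) (basis_prod e f) = SS (fun x => basis_form x f) (basis_prod d e).
Proof.
move=> /D_facts [hi hc] d e f hd he hf.
rewrite !SS_bp.
have bfe : forall x y, (x * y != y * x) = basis_form x y by [].
rewrite !bfe.
case hef: (basis_form e f); case hde: (basis_form d e) => //.
- have -> : basis_form d (e ^ f) = basis_form (d ^ e) f.
    by rewrite -(bf_conj _ _ e) hc // hef.
  by case: (basis_form d f); case: (basis_form (d ^ e) f).
- have cde : d * e = e * d by move: hde; rewrite /basis_form; case: eqP.
  have -> : basis_form d (e ^ f) = basis_form d f.
    by rewrite -(bf_conj _ _ e) conj_fix // hc // hef.
  by rewrite addbb.
- have cef : e * f = f * e by move: hef; rewrite /basis_form; case: eqP.
  have -> : basis_form (d ^ e) f = basis_form d f.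
    by rewrite -(bf_conj d f e) (conj_fix (esym cef)).
  by rewrite addbb.
Qed.
End Main.

Theorem proposition2p1 (G : groupType) (D : {pred G}) :
  three_transp_class D ->
  forall u v w : {fset G}, in_AD D u -> in_AD D v -> in_AD D w ->
    AD_form u (AD_prod v w) = AD_form (AD_prod u v) w.
Proof.
move=> hD u v w hu hv hw.
have -> : AD_form u (AD_prod v w) = SS (fun d => SS (basis_form d) (AD_prod v w)) u by [].
have -> : AD_form (AD_prod u v) w = SS (fun x => SS (basis_form x) w) (AD_prod u v) by [].
rewrite /AD_prod (SS_big (fun x => SS (basis_form x) w)).
rewrite [LHS]SS_def; apply: eq_big_seq; move=> d hdu /=.
rewrite SS_big [RHS]SS_big; apply: eq_big_seq; move=> e hev /=.
rewrite SS_big.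
have -> : SS (fun x => SS (basis_form x) w) (basis_prod d e) =
  SS (fun x => \big[addb/false]_(f <- enum_fset w) basis_form x f) (basis_prod d e) by [].
rewrite SS_exch; apply: eq_big_seq; move=> f hfw /=.
by apply: (key hD); [exact: hu|exact: hv|exact: hw].
Qed.
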